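(* Let $h_m:[a,b]\to[c_m,d_m]$ ($m\in\mathcal M\subset\mathbb N$) be continuous increasing functions such that $\sum_{m\in\mathcal M}h_m(x)<\infty$ for all $x\in[a,b]$. Let $K\subset[a,b]$ be closed with $\lambda(h_m(K))=0$ for all $m\in\mathcal M$. Then $h(x):=\sum_{m\in\mathcal M}h_m(x)$ defines a continuous increasing function $h:[a,b]\to[c,d]$ (for some $c,d\in\mathbb R$) with $\lambda(h(K))=0$.
   Context: $\lambda$ denotes Lebesgue measure on $\mathbb R$. *)

(* Defs.v *)
From HB Require Import structures.
From mathcomp Require Import all_boot all_order all_algebra.
From mathcomp Require Import all_classical all_reals all_analysis.
Set Implicit Arguments. Unset Strict Implicit. Unset Printing Implicit Defensive.

(* Main.v *)
Require Import Defs.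
From HB Require Import structures.
From mathcomp Require Import all_boot all_order all_algebra.
From mathcomp Require Import all_classical all_reals all_analysis.
Import Order.TTheory GRing.Theory Num.Theory.
Import numFieldNormedType.Exports.
Local Open Scope classical_set_scope.
Local Open Scope ring_scope.
From mathcomp Require Import ring lra measurable_realfun.
Section S.
Context (R : realType).
Lemma wcont_ed (A : set R) (f : R -> R) :
  {within A, continuous f} <-> (forall x, A x -> forall e : R, 0 < e ->
    exists2 d : R, 0 < d & forall y, A y -> `|x - y| < d -> `|f x - f y| < e).
Proof.
split.
- move=> cf x Ax e e0.
  have := cf x. rewrite /continuous_at.
  move=> /cvgrPdist_lt /(_ e e0).
  rewrite (_ : nbhs (x : subspace A) = within A (nbhs x)); last by rewrite nbhs_subspace_in.
  rewrite near_withinE => /nbhs_ballP [d d0 Hd].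
  exists d => // y Ay xy; apply: Hd => //.
- move=> H; rewrite continuous_subspace_in => x; rewrite inE => Ax.
  rewrite /continuous_at /=.
  apply/cvgrPdist_lt => e e0.
  rewrite -nbhs_subspace_in //.
  rewrite near_withinE; apply/nbhs_ballP.
  have [d d0 Hd] := H x Ax e e0.
  by exists d => // y /= xy Ay; apply: Hd.
Qed.
End S.

Section Grid.
Context (R : realType) (a b : R) (K : set R).
Hypothesis ab : a <= b.

Definition tt (n i : nat) : R := a + i%:R * ((b - a) / n%:R).
Definition cell (n i : nat) : Prop := exists2 x, K x & tt n i <= x <= tt n i.+1.
Definition V (g : R -> R) (n : nat) : R :=
  \sum_(0 <= i < n | `[< cell n i >]) (g (tt n i.+1) - g (tt n i)).

Lemma tt_step n i : tt n i.+1 - tt n i = (b - a) / n%:R.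
Proof. rewrite /tt -addn1 natrD; lra. Qed.

Lemma step_ge0 n : 0 <= (b - a) / n%:R.
Proof. by apply: divr_ge0; rewrite ?subr_ge0. Qed.

Lemma tt_le n i j : (i <= j)%N -> tt n i <= tt n j.
Proof.
move=> ij; rewrite /tt lerD2l; apply: ler_wpM2r; first exact: step_ge0.
by rewrite ler_nat.
Qed.

Lemma tt0 n : tt n 0 = a.
Proof. by rewrite /tt mul0r addr0. Qed.

Lemma ttn n : (0 < n)%N -> tt n n = b.
Proof.
move=> n0; rewrite /tt mulrCA divff ?mulr1 ?pnatr_eq0 -?lt0n //; lra.
Qed.

Lemma tt_in n i : (0 < n)%N -> (i <= n)%N -> a <= tt n i <= b.
Proof.
move=> n0 ilen; apply/andP; split.
  by rewrite -(tt0 n); apply: tt_le.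
by rewrite -(@ttn n n0); apply: tt_le.
Qed.

Lemma cell_cover n x : (0 < n)%N -> a <= x <= b ->
  exists2 i, (i < n)%N & tt n i <= x <= tt n i.+1.
Proof.
move=> n0 /andP[ax xb].
set s := (b - a) / n%:R.
have n0' : 0 < n%:R :> R by rewrite ltr0n.
have [s0|spos] := eqVneq s 0.
  have ba : b = a.
    by move: s0; rewrite /s => /eqP; rewrite mulf_eq0 invr_eq0 (gt_eqF n0') orbF subr_eq0 => /eqP.
  exists 0%N => //; rewrite /tt -/s s0 !mulr0 addr0; lra.
have {}spos : 0 < s by rewrite lt0r spos step_ge0.
set k := Num.truncn ((x - a) / s).
have xa0 : 0 <= (x - a) / s by apply: divr_ge0; lra.
have /andP[k1 k2] := truncn_itv xa0.
have tk : forall j, tt n j = a + j%:R * s by [].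
have [kn|kn] := ltnP k n.
  exists k => //; rewrite !tk; apply/andP; split.
    by move: k1; rewrite ler_pdivlMr //; lra.
  by move: k2; rewrite ltr_pdivrMr //; lra.
have xb' : x = b.
  apply/eqP; rewrite eq_le xb /=.
  have : n%:R <= (x - a) / s by apply: le_trans k1; rewrite ler_nat.
  rewrite ler_pdivlMr // /s mulrCA divff ?mulr1; [lra|by rewrite gt_eqF].
exists n.-1; first by rewrite prednK // leqnn.
rewrite prednK // (@ttn n n0) xb' lexx andbT.
by case/andP: (@tt_in n n.-1 n0 (leq_pred n)).
Qed.

Lemma tt_itv n i : (0 < n)%N -> (i <= n)%N -> tt n i \in `[a, b].
Proof. by move=> n0 ilen; rewrite in_itv /= tt_in. Qed.

Lemma V_ext f g n : (forall x, f x = g x) -> V f n = V g n.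
Proof. by move=> fg; apply: eq_bigr => i _; rewrite !fg. Qed.

Lemma V_add f g n : V (fun x => f x + g x) n = V f n + V g n.
Proof. by rewrite /V -big_split /=; apply: eq_bigr => i _; ring. Qed.

Lemma V_ge0 g n : {in `[a, b] &, nondecreasing g} -> (0 < n)%N -> 0 <= V g n.
Proof.
move=> gm n0; rewrite /V big_mkcond big_seq /=; apply: sumr_ge0 => i.
rewrite mem_index_iota => /andP[_ iln]; case: ifP => _ //.
rewrite subr_ge0; apply: gm; rewrite ?tt_itv //; try exact: ltnW.
exact: tt_le.
Qed.

Lemma V_le_tot g n : {in `[a, b] &, nondecreasing g} -> (0 < n)%N ->
  V g n <= g b - g a.
Proof.
move=> gm n0; rewrite /V big_mkcond /=.
apply: (@le_trans _ _ (\sum_(0 <= i < n) (g (tt n i.+1) - g (tt n i)))).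
  apply: ler_sum_nat => i /andP[_ iln]; case: ifP => _ //.
  rewrite subr_ge0; apply: gm; rewrite ?tt_itv //; try exact: ltnW.
  exact: tt_le.
by rewrite telescope_sumr // (@ttn n n0) tt0.
Qed.

Lemma leb_cc (x y : R) : x <= y ->
  (lebesgue_measure (`[x, y]%classic : set R) = (y - x)%:E)%E.
Proof.
move=> xy; rewrite lebesgue_measure_itv /= lte_fin.
have [_|yx] := ltP x y; first by rewrite -EFinD.
have -> : y = x by apply/eqP; rewrite eq_le yx xy.
by rewrite subrr.
Qed.

Lemma leb_oc (x y : R) : x <= y ->
  (lebesgue_measure (`]x, y]%classic : set R) = (y - x)%:E)%E.
Proof.
move=> xy; rewrite lebesgue_measure_itv /= lte_fin.
have [_|yx] := ltP x y; first by rewrite -EFinD.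
have -> : y = x by apply/eqP; rewrite eq_le yx xy.
by rewrite subrr.
Qed.

Lemma V_meas_le (g : R -> R) (n : nat) : {in `[a, b] &, nondecreasing g} -> K `<=` `[a, b] ->
  measurable (g @` K) -> (0 < n)%N ->
  (lebesgue_measure (g @` K) <= (V g n)%:E)%E.
Proof.
move=> gm Kab mgK n0.
pose F := fun i : nat => if `[< cell n i >] then `[g (tt n i), g (tt n i.+1)]%classic else set0.
have mF : forall i, measurable (F i).
  by move=> i; rewrite /F; case: ifP.
have sub : g @` K `<=` \big[setU/set0]_(i < n) F i.
  move=> _ [x Kx <-]; have := Kab x Kx; rewrite /= in_itv /= => xab.
  have [i iln /andP[t1 t2]] := @cell_cover n x n0 xab.
  rewrite -bigcup_mkord; exists i => //; rewrite /F.
  have -> : `[< cell n i >] = true by apply/asboolT; exists x => //; rewrite t1 t2.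
  rewrite /= in_itv /=; apply/andP; split; apply: gm => //; rewrite ?tt_itv //;
    try exact: ltnW; by rewrite in_itv /=.
apply: (le_trans (@le_measure _ _ _ lebesgue_measure _ _ _ _ sub)).
- by rewrite inE.
- by rewrite inE; apply: bigsetU_measurable => i _; exact: mF.
apply: (le_trans (Boole_inequality _ _)); first by move=> i _; exact: mF.
rewrite /V -sumEFin big_mkord [X in (_ <= X)%E]big_mkcond /=; apply: lee_sum => i _.
rewrite /F; case: ifP => _; last by rewrite measure0.
have iln := ltn_ord i.
rewrite leb_cc //; apply: gm; rewrite ?tt_itv //; [exact: ltnW | exact: tt_le].
Qed.

Lemma meas_img (g : R -> R) : {within `[a, b], continuous g} -> closed K ->
  K `<=` `[a, b] -> compact (g @` K) /\ measurable (g @` K).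
Proof.
move=> gc cK Kab.
have cpK : compact K :=  (subclosed_compact cK (@segment_compact R a b) Kab).
have cpg : compact (g @` K).
  by apply: continuous_compact => //; exact: (continuous_subspaceW Kab).
split => //; exact: compact_measurable.
Qed.

Lemma V_small (g : R -> R) : {within `[a, b], continuous g} ->
  {in `[a, b] &, nondecreasing g} -> closed K -> K `<=` `[a, b] ->
  lebesgue_measure (g @` K) = 0%E ->
  forall e : R, 0 < e -> \forall n \near \oo, V g n < e.
Proof.
move=> gc gm cK Kab g0 e e0.
have cpK : compact K := (subclosed_compact cK (@segment_compact R a b) Kab).
have [cpg mg] := @meas_img g gc cK Kab.
have gfin : (lebesgue_measure (g @` K) < +oo)%E by rewrite g0 ltry.
have [U [oU gKU Ue]] := @lebesgue_regularity_outer R (g @` K) e mg gfin e0.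
have mU : measurable U by exact: open_measurable.
have UE : (lebesgue_measure U < e%:E)%E.
  rewrite -(setDUK gKU) measureU //.
  - change ((lebesgue_measure (g @` K) + lebesgue_measure (U `\` g @` K)) < e%:E)%E.
    by rewrite g0 add0e.
  - exact: measurableD.
  - by apply/seteqP; split => y //= [? []].
pose P := fun (n : nat) (x : R) => forall y1 y2 z, y1 \in `[a, b] -> y2 \in `[a, b] ->
  `|x - y1| <= (b - a) / n%:R -> `|x - y2| <= (b - a) / n%:R ->
  g y1 <= z <= g y2 -> U z.
have cov : \forall n \near \oo, K `<=` P n.
  move/compact_near_coveringP : cpK => H.
  apply: (H nat \oo P _) => x Kx.
  have xab : `[a, b]%classic x := Kab x Kx.
  have gU : U (g x) by apply: gKU; exists x.
  have /nbhs_ballP [s s0 Hs] : nbhs (g x) U by apply: open_nbhs_nbhs; split.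
  have [d d0 Hd] := (proj1 (@wcont_ed R _ _) gc) x xab s s0.
  exists ([set y | `|x - y| < d / 2], [set n : nat | (b - a) / n%:R < d / 2]).
    split => /=.
      apply/nbhs_ballP; exists (d / 2); first by rewrite /= divr_gt0.
      by move=> y /=.
    exists (Num.truncn (2 * (b - a) / d)).+1 => // n /= Nn.
    have d2 : 0 < d / 2 by rewrite divr_gt0.
    have := truncnS_gt (2 * (b - a) / d).
    have : (Num.truncn (2 * (b - a) / d)).+1%:R <= n%:R :> R by rewrite ler_nat.
    move=> h1 h2; have h3 := lt_le_trans h2 h1.
    have q0 : 0 <= 2 * (b - a) / d.
      by apply: divr_ge0; [rewrite mulr_ge0 // subr_ge0 | exact: ltW].
    have n0 : 0 < n%:R :> R by apply: le_lt_trans h3.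
    move: h3; rewrite ltr_pdivrMr // => h3; rewrite ltr_pdivrMr //.
    have : 2 * (b - a) < n%:R * d by [].
    move=> hh; clear -hh d0; lra.
  move=> [x' n] /= [xx' nn] y1 y2 z y1ab y2ab d1 d2 /andP[z1 z2].
  apply: Hs => /=.
  have h1 : `|g x - g y1| < s.
    apply: Hd; first by move: y1ab; rewrite in_itv.
    rewrite (le_lt_trans (ler_distD x' _ _)) //; lra.
  have h2 : `|g x - g y2| < s.
    apply: Hd; first by move: y2ab; rewrite in_itv.
    rewrite (le_lt_trans (ler_distD x' _ _)) //; lra.
  move: h1 h2; rewrite !ltr_norml => /andP[? ?] /andP[? ?].
  change (`|g x - z| < s); rewrite ltr_norml; apply/andP; split; lra.
near=> n.
have Pn : K `<=` P n by near: n; exact: cov.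
have n0 : (0 < n)%N by near: n; exists 1%N.
pose F := fun i : nat => if (i < n)%N && `[< cell n i >] then
  `]g (tt n i), g (tt n i.+1)]%classic else set0.
have mF : forall i, measurable (F i) by move=> i; rewrite /F; case: ifP.
have tF : trivIset setT F.
  move=> i j _ _ [z [Fi Fj]].
  wlog ij : i j Fi Fj / (i <= j)%N.
    move=> W; case/orP: (leq_total i j) => ?; [exact: W | apply/esym; exact: W].
  apply/eqP; rewrite eqn_leq ij /= leqNgt; apply/negP => ji.
  move: Fi Fj; rewrite /F; case: ifP => [/andP[iln _]|_]; last by move=> [].
  case: ifP => [/andP[jln _]|_]; last by move=> _ [].
  rewrite /= !in_itv /= => /andP[_ z1] /andP[z2 _].
  have h : g (tt n i.+1) <= g (tt n j).
    apply: gm; rewrite ?tt_itv //; try exact: ltnW.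
    exact: tt_le.
  by have := le_lt_trans (le_trans z1 h) z2; rewrite ltxx.
have FU : \big[setU/set0]_(i < n) F i `<=` U.
  rewrite -bigcup_mkord => z [i _]; rewrite /F.
  case: ifP => [/andP[iln /asboolP[x Kx /andP[t1 t2]]]|_]; last by move=> [].
  rewrite /= in_itv /= => /andP[z1 z2].
  have st := tt_step n i.
  apply: (Pn x Kx (tt n i) (tt n i.+1) z); rewrite ?tt_itv //; try exact: ltnW.
  - by rewrite ler_norml; apply/andP; split; lra.
  - by rewrite ler_norml; apply/andP; split; lra.
  - by rewrite (ltW z1) z2.
have VE : (V g n)%:E = \sum_(i < n) lebesgue_measure (F i).
  rewrite /V -sumEFin big_mkcond big_mkord; apply: eq_bigr => i _.
  rewrite /F ltn_ord /=; case: ifP => _; last by rewrite measure0.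
  have iln := ltn_ord i.
  rewrite leb_oc //; apply: gm; rewrite ?tt_itv //; [exact: ltnW | exact: tt_le].
rewrite -lte_fin VE -measure_bigsetU //.
apply: le_lt_trans UE; apply: le_measure; rewrite ?inE //.
by apply: bigsetU_measurable => i _; exact: mF.
Unshelve. all: by end_near.
Qed.
End Grid.

Theorem lemma3p3 (R : realType) (a b : R) (M : set nat)
  (hs : nat -> R -> R) (c d : nat -> R) (K : set R) :
  (forall m, m \in M -> {within `[a, b], continuous hs m}) ->
  (forall m, m \in M -> {in `[a, b] &, nondecreasing (hs m)}) ->
  (forall m, m \in M -> forall x, x \in `[a, b] -> hs m x \in `[c m, d m]) ->
  (forall x, x \in `[a, b] ->
     cvgn (fun n => \sum_(0 <= m < n | m \in M) hs m x)) ->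
  closed K -> K `<=` `[a, b] ->
  (forall m, m \in M -> (@lebesgue_measure R) (hs m @` K) = 0%E) ->
  let h := fun x => limn (fun n => \sum_(0 <= m < n | m \in M) hs m x) in
  [/\ {within `[a, b], continuous h},
      {in `[a, b] &, nondecreasing h},
      (exists c0 d0 : R, forall x, x \in `[a, b] -> h x \in `[c0, d0]) &
      (@lebesgue_measure R) (h @` K) = 0%E].
Proof.
move=> hc hm _ hcv cK Kab h0 h.
pose S := fun N x => \sum_(0 <= m < N | m \in M) hs m x.
have hS : forall x, h x = limn (fun n => S n x) by [].
have Sm : forall N, {in `[a, b] &, nondecreasing (S N)}.
  move=> N x y xi yi xy; apply: ler_sum => m mM; exact: hm.
have S0 : forall x, S 0%N x = 0 by move=> x; rewrite /S big_geq.
have SS : forall N x, S N.+1 x = S N x + (if N \in M then hs N x else 0).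
  by move=> N x; rewrite /S big_mkcond big_nat_recr //= -big_mkcond.
have Sc : forall N, {within `[a, b], continuous (S N)}.
  elim=> [|N IH].
    have -> : S 0%N = fun=> 0 by apply: funext => x; rewrite S0.
    by apply: continuous_subspaceT; exact: cst_continuous.
  case NM: (N \in M).
    have -> : S N.+1 = (fun x => S N x + hs N x).
      by apply: funext => x; rewrite SS NM.
    move=> x; apply: continuousD; first exact: IH.
    exact: hc.
  have -> : S N.+1 = S N by apply: funext => x; rewrite SS NM addr0.
  exact: IH.
have Fm : forall N x y, x \in `[a, b] -> y \in `[a, b] -> x <= y ->
    S N y - S N x <= h y - h x.
  move=> N x y xi yi xy.
  have cv : (fun n => S n y - S n x) @ \oo --> h y - h x.
    by apply: cvgB; [exact: hcv | exact: hcv].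
  suff : [set r | S N y - S N x <= r] (h y - h x) by [].
  apply: (closed_cvg _ (@closed_ge _ (S N y - S N x)) _ _ cv).
  near=> n.
  have Nn : (N <= n)%N by near: n; exists N.
  rewrite /= /S (big_cat_nat (leq0n N) Nn) (big_cat_nat (leq0n N) Nn) /=.
  set A := \sum_(0 <= i < N | i \in M) hs i y.
  set B := \sum_(0 <= i < N | i \in M) hs i x.
  have : 0 <= \sum_(N <= i < n | i \in M) hs i y - \sum_(N <= i < n | i \in M) hs i x.
    rewrite -sumrB; apply: sumr_ge0 => m mM; rewrite subr_ge0; exact: hm.
  lra.
have hmono : {in `[a, b] &, nondecreasing h}.
  move=> x y xi yi xy; have := Fm 0%N x y xi yi xy; rewrite !S0; lra.
pose T := fun N x => h x - S N x.
have Tm : forall N, {in `[a, b] &, nondecreasing (T N)}.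
  move=> N x y xi yi xy; have := Fm N x y xi yi xy; rewrite /T; lra.
have Tb : forall N x y, x \in `[a, b] -> y \in `[a, b] ->
    `|T N x - T N y| <= T N b - T N a.
  move=> N x y xi yi.
  have [ax xb] : a <= x /\ x <= b by move: xi; rewrite in_itv => /andP.
  have [ay yb] : a <= y /\ y <= b by move: yi; rewrite in_itv => /andP.
  have ai : a \in `[a, b] by rewrite in_itv /= lexx; apply: le_trans xb.
  have bi : b \in `[a, b] by rewrite in_itv /= lexx andbT; apply: le_trans xb.
  have h1 := Tm N a x ai xi ax.
  have h2 := Tm N x b xi bi xb.
  have h3 := Tm N a y ai yi ay.
  have h4 := Tm N y b yi bi yb.
  rewrite ler_norml; apply/andP; split; lra.
have Tlim : forall e, 0 < e -> a <= b -> exists N, T N b - T N a < e.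
  move=> e e0 ab.
  have ai : a \in `[a, b] by rewrite in_itv /= lexx.
  have bi : b \in `[a, b] by rewrite in_itv /= lexx andbT.
  have cv : (fun N => T N b - T N a) @ \oo --> (h b - h b) - (h a - h a).
    apply: cvgB; apply: cvgB; try exact: cvg_cst; exact: hcv.
  rewrite !subrr in cv.
  move/cvgrPdist_lt : cv => /(_ e e0) [N _ HN].
  exists N; have := HN N (leqnn N); rewrite sub0r normrN.
  by move/(le_lt_trans (ler_norm _)).
have hc' : {within `[a, b], continuous h}.
  apply/wcont_ed => x xi e e0.
  have [ax xb] : a <= x /\ x <= b by move: xi => /=; rewrite in_itv => /andP.
  have e2 : 0 < e / 2 by rewrite divr_gt0.
  have [N TN] := Tlim (e / 2) e2 (le_trans ax xb).
  have [dd dd0 Hd] := proj1 (wcont_ed _ _ _) (Sc N) x xi (e / 2) e2.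
  exists dd => // y yi xy.
  have hxy : h x - h y = (S N x - S N y) + (T N x - T N y) by rewrite /T; ring.
  rewrite hxy (le_lt_trans (ler_normD _ _)) //.
  have h1 := Hd y yi xy.
  have xi2 : x \in `[a, b] by rewrite in_itv /= ax xb.
  have yi2 : y \in `[a, b] by move: yi; rewrite /= in_itv.
  have h2 := Tb N x y xi2 yi2.
  lra.
split => //.
  exists (h a), (h b) => x xi.
  have [ax xb] : a <= x /\ x <= b by move: xi; rewrite in_itv => /andP.
  have ai : a \in `[a, b] by rewrite in_itv /= lexx; apply: le_trans xb.
  have bi : b \in `[a, b] by rewrite in_itv /= lexx andbT; apply: le_trans xb.
  by rewrite in_itv /= !hmono.
case: (leP a b) => [ab|ba]; last first.
  have -> : h @` K = set0.
    apply/seteqP; split => // y [x Kx _].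
    have := Kab x Kx; rewrite /= in_itv /= => /andP[ax xb].
    by have := lt_le_trans ba (le_trans ax xb); rewrite ltxx.
  by rewrite measure0.
have [_ mh] := @meas_img R a b K h hc' cK Kab.
have VS : forall N e, 0 < e -> \forall n \near \oo, V R a b K (S N) n < e.
  elim=> [|N IH] e e0.
    near=> n; rewrite (@V_ext R a b K (S 0%N) (fun=> 0) n S0) /V big1 // => i _.
    by rewrite subrr.
  have e2 : 0 < e / 2 by rewrite divr_gt0.
  case NM: (N \in M).
    have VN := @V_small R a b K ab (hs N) (hc N NM) (hm N NM) cK Kab (h0 N NM) _ e2.
    near=> n.
    rewrite (@V_ext R a b K (S N.+1) (fun x => S N x + hs N x) n); last first.
      by move=> x; rewrite SS NM.
    rewrite V_add.
    have h1 : V R a b K (S N) n < e / 2 by near: n; exact: IH.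
    have h2 : V R a b K (hs N) n < e / 2 by near: n; exact: VN.
    lra.
  near=> n.
  rewrite (@V_ext R a b K (S N.+1) (S N) n); last by move=> x; rewrite SS NM addr0.
  by near: n; exact: IH.
have Hle : forall e, 0 < e -> (lebesgue_measure (h @` K) <= e%:E)%E.
  move=> e e0; have e2 : 0 < e / 2 by rewrite divr_gt0.
  have [N TN] := Tlim _ e2 ab.
  have [n [n0 Vn]] : exists n, (0 < n)%N /\ V R a b K (S N) n < e / 2.
    have [n1 _ Hn] := VS N _ e2.
    by exists n1.+1; split => //; apply: Hn => /=; exact: leqnSn.
  apply: (le_trans (@V_meas_le R a b K ab h n hmono Kab mh n0)).
  rewrite lee_fin (@V_ext R a b K h (fun x => S N x + T N x) n); last first.
    by move=> x; rewrite /T; ring.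
  rewrite V_add.
  have := @V_le_tot R a b K ab (T N) n (Tm N) n0.
  lra.
have v0 : (0 <= lebesgue_measure (h @` K))%E by apply: measure_ge0.
move: Hle v0; case: (lebesgue_measure (h @` K)) => [r | |] Hle v0.
- have r0 : 0 <= r by move: v0; rewrite lee_fin.
  have r0' : r <= 0.
    rewrite leNgt; apply/negP => rp.
    have r2 : 0 < r / 2 by rewrite divr_gt0.
    have := Hle (r / 2) r2; rewrite lee_fin; lra.
  by have -> : r = 0 by apply/eqP; rewrite eq_le r0 r0'.
- by move: (Hle 1 ltr01); rewrite leye_eq.
- by move: v0; rewrite leeNy_eq.
Unshelve. all: by end_near.
Qed.
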